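(* Let $0\le\ell\le r$. The prime ideals $[I_0,\dots,I_\ell]$ of $\Omega_{H_\ell}$ with $I_0=0$ are exactly the $\ell+1$ ideals $$0\subsetneq\mathcal L(0)\subsetneq\mathcal L^2(0)\subsetneq\cdots\subsetneq\mathcal L^\ell(0),$$ where, for $0\le k\le\ell$, $\mathcal L^k(0)$ is the ideal of $\Omega_{H_\ell}$ obtained by applying $\mathcal L$ $k$ times to the zero ideal $[0,\dots,0]$ of $\Omega_{H_{\ell-k}}$.
   Context: Fix a prime $p$ and an integer $r\ge0$. For $0\le k\le r$ let $R_k$ be the commutative ring which is free as a $\mathbb{Z}$-module with basis $X_{k,0},\dots,X_{k,k}$ and multiplication $X_{k,i}X_{k,j}=p^{k-\max(i,j)}X_{k,\min(i,j)}$; thus $X_{k,k}=1$, and an integer $n$ is identified with $nX_{k,k}$. For $0\le k\le\ell\le r$ define: the additive map $\mathrm{ind}^\ell_k:R_k\to R_\ell$, $X_{k,i}\mapsto X_{\ell,i}$; the ring homomorphism $\mathrm{res}^\ell_k:R_\ell\to R_k$, $\mathrm{res}^\ell_k(X_{\ell,i})=p^{\ell-k}X_{k,i}$ if $i\le k$ and $=p^{\ell-i}$ if $i\ge k$; and the multiplicative map $\mathrm{jnd}^\ell_k:R_k\to R_\ell$, $$\mathrm{jnd}^\ell_k\Big(\sum_{i=0}^k m_iX_{k,i}\Big)=m_kX_{\ell,\ell}+\sum_{k\le i<\ell}\frac{m_k^{p^{\ell-i}}-m_k^{p^{\ell-i-1}}}{p^{\ell-i}}X_{\ell,i}+\sum_{0\le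 i<k}\frac{(\sum_{s=i}^k m_sp^{k-s})^{p^{\ell-k}}-(\sum_{s=i+1}^k m_sp^{k-s})^{p^{\ell-k}}}{p^{\ell-i}}X_{\ell,i}$$ ($m_i\in\mathbb{Z}$). For $k=\ell$ these maps are the identity. These data form the Burnside Tambara functor on $\mathbb{Z}/p^r\mathbb{Z}$; keeping indices $\le n$ gives $\Omega_{H_n}$. An ideal of $\Omega_{H_n}$ is a sequence $[I_0,\dots,I_n]$ of ideals $I_k\subseteq R_k$ such that for every $1\le k\le n$: $\mathrm{ind}^k_{k-1}(I_{k-1})\subseteq I_k$, $\mathrm{res}^k_{k-1}(I_k)\subseteq I_{k-1}$, $\mathrm{jnd}^k_{k-1}(I_{k-1})\subseteq I_k$; inclusion is componentwise. It is proper if $I_0\ne R_0$. A proper ideal is prime if for all $0\le\ell'\le k\le n$, $a\in R_k$, $b\in R_{\ell'}$: whenever $(\mathrm{jnd}^m_i\mathrm{res}^k_i(a))\cdot(\mathrm{jnd}^m_j\mathrm{res}^{\ell'}_j(b))\in I_m$ for all $0\le i\le k$, $0\le j\le\ell'$, $m=\max(i,j)$, then $a\in I_k$ or $b\in I_{\ell'}$. For an ideal $I\subseteq R_{k-1}$, $L(I)=(\mathrm{res}^k_{k-1})^{-1}(I)\subseteq R_k$; for an ideal $\mathscr I=[I_0,\dots,I_{k-1}]$ of $\Omega_{H_{k-1}}$, $\mathcal L\mathscr I=[I_0,\dots,I_{k-1},L(I_{k-1})]$. *)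

(* Defs.v *)
(* Burnside Tambara functor on Z/p^r. *)
From HB Require Import structures.
From mathcomp Require Import all_boot all_order all_algebra.
Unset Printing Implicit Defensive.
Import Order.TTheory GRing.Theory Num.Theory.
Local Open Scope ring_scope.

(* R_k : coefficient vectors (m_0,...,m_k) w.r.t. the basis X_{k,0},...,X_{k,k}. *)
Definition R (k : nat) := {ffun 'I_k.+1 -> int}.

(* coefficient of X_{k,t} (0 if t > k) *)
Definition cf k (a : R k) (t : nat) : int := if (t <= k)%N then a (inord t) else 0.

Definition mk k (f : nat -> int) : R k := [ffun i : 'I_k.+1 => f (nat_of_ord i)].

Definition pw (p e : nat) : int := ((p ^ e)%N)%:Z.

Definition zeroR (k : nat) : R k := mk k (fun _ => 0).
Definition addR k (a b : R k) : R k := mk k (fun t => cf k a t + cf k b t).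
Definition oppR k (a : R k) : R k := mk k (fun t => - cf k a t).
(* X_{k,i} X_{k,j} = p^(k - max i j) X_{k, min i j} *)
Definition mulR (p k : nat) (a b : R k) : R k :=
  mk k (fun t => \sum_(i < k.+1) \sum_(j < k.+1)
          (if minn i j == t then a i * b j * pw p (k - maxn i j) else 0)).

Definition ind (k l : nat) (a : R k) : R l := mk l (fun t => cf k a t).

Definition res (p l k : nat) (a : R l) : R k :=
  mk k (fun t => if (t < k)%N then pw p (l - k) * cf l a t
                 else \sum_(k <= i < l.+1) cf l a i * pw p (l - i)).

(* jnd^l_k, with exact integer divisions *)
Definition jnd (p k l : nat) (a : R k) : R l :=
  let m := cf k a k in
  let S i := \sum_(i <= s < k.+1) cf k a s * pw p (k - s) in
  mk l (fun t =>
    if t == l then m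
    else if (k <= t)%N then
      ((m ^+ (p ^ (l - t))%N - m ^+ (p ^ (l - t - 1))%N) %/ pw p (l - t))%Z
    else
      ((S t ^+ (p ^ (l - k))%N - S t.+1 ^+ (p ^ (l - k))%N) %/ pw p (l - t))%Z).

(* A family of subsets I_t of R_t; only the indices t <= n are relevant for Omega_{H_n}. *)
Definition ideal_family := forall t : nat, R t -> Prop.

Definition is_idealR (p k : nat) (I : R k -> Prop) : Prop :=
  [/\ I (zeroR k),
      (forall x y, I x -> I y -> I (addR k x y)),
      (forall x, I x -> I (oppR k x)) &
      (forall a x, I x -> I (mulR p k a x))].

Definition is_ideal (p n : nat) (I : ideal_family) : Prop :=
  (forall k, (k <= n)%N -> is_idealR p k (I k)) /\
  (forall k, (1 <= k)%N -> (k <= n)%N ->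
     [/\ (forall x, I k.-1 x -> I k (ind k.-1 k x)),
         (forall x, I k x -> I k.-1 (res p k k.-1 x)) &
         (forall x, I k.-1 x -> I k (jnd p k.-1 k x))]).

Definition is_prime_ideal (p n : nat) (I : ideal_family) : Prop :=
  [/\ is_ideal p n I,
      ~ (forall x : R 0, I 0%N x) &
      (forall (k l' : nat), (l' <= k)%N -> (k <= n)%N ->
        forall (a : R k) (b : R l'),
          (forall i j, (i <= k)%N -> (j <= l')%N ->
             I (maxn i j) (mulR p (maxn i j) (jnd p i (maxn i j) (res p k i a))
                                  (jnd p j (maxn i j) (res p l' j b)))) ->
          I k a \/ I l' b)].

Definition eqfam (n : nat) (I J : ideal_family) : Prop :=
  forall t, (t <= n)%N -> forall x : R t, I t x <-> J t x.
Definition subfam (n : nat) (I J : ideal_family) : Prop :=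
  forall t, (t <= n)%N -> forall x : R t, I t x -> J t x.
Definition strict_subfam (n : nat) (I J : ideal_family) : Prop :=
  subfam n I J /\ ~ subfam n J I.

Definition zerofam : ideal_family := fun t (x : R t) => x = zeroR t.

Definition calL (p n : nat) (I : ideal_family) : ideal_family :=
  fun t => if (t <= n)%N then I t else (fun x : R t => I t.-1 (res p t t.-1 x)).

(* Lpow p m k = calL^k applied to the zero ideal of Omega_{H_m}; an ideal of Omega_{H_(m+k)} *)
Fixpoint Lpow (p m k : nat) : ideal_family :=
  match k with
  | 0 => zerofam
  | k'.+1 => calL p (m + k') (Lpow p m k')
  end.

(* Main.v *)
Require Import Defs.
From mathcomp Require Import all_boot all_order all_algebra finfield.
From mathcomp Require Import zify ring.
From Stdlib Require Import Classical.
Import Order.TTheory GRing.Theory Num.Theory.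
Local Open Scope ring_scope.

Lemma fermat_int (p : nat) (M : int) : prime p -> (p%:Z %| M ^+ p - M)%Z.
Proof.
move=> pp.
rewrite (dvdz_pcharf (pchar_Fp pp)).
rewrite rmorphB /= rmorphXn /=.
have := @expf_card ('F_p)%type (M%:~R).
rewrite card_Fp // => ->.
by rewrite subrr.
Qed.

Lemma lift_int (p d : nat) (a b : int) : prime p -> (0 < d)%N ->
  ((p ^ d)%:Z %| a - b)%Z -> ((p ^ d.+1)%:Z %| a ^+ p - b ^+ p)%Z.
Proof.
move=> pp d0 H.
have Hp : (p%:Z %| a - b)%Z.
  apply: dvdz_trans H; rewrite /dvdz /=. by apply: dvdn_exp.
rewrite subrXX expnSr PoszM; apply: dvdz_mul => //.
set S := \sum_(_ < _) _.
have -> : S = (S - \sum_(i < p) b ^+ p.-1) + \sum_(i < p) b ^+ p.-1 by rewrite subrK.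
apply: rpredD; last first.
  rewrite sumr_const card_ord -mulr_natl; apply: dvdz_mulr; by rewrite natz dvdzz.
rewrite /S -sumrB; apply: rpred_sum => i _.
have -> : b ^+ p.-1 = b ^+ (p.-1 - i) * b ^+ i.
  by rewrite -exprD subnK // -ltnS prednK ?prime_gt0.
rewrite -mulrBl; apply: dvdz_mulr.
rewrite subrXX; apply: dvdz_mulr => //.
Qed.


Definition phi (p k : nat) (a : R k) (s : nat) : int :=
  \sum_(s <= i < k.+1) cf k a i * pw p (k - i).
Arguments phi p {k} a s.

Lemma cf_mk k f t : (t <= k)%N -> cf k (mk k f) t = f t.
Proof. by move=> h; rewrite /cf h /mk ffunE inordK. Qed.

Lemma cf_out k (a : R k) t : (k < t)%N -> cf k a t = 0.
Proof. by rewrite /cf ltnNge => /negbTE ->. Qed.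

Lemma cf_ord k (a : R k) (i : 'I_k.+1) : cf k a i = a i.
Proof. by rewrite /cf -ltnS ltn_ord inord_val. Qed.

Lemma eq_R k (a b : R k) : (forall t, (t <= k)%N -> cf k a t = cf k b t) -> a = b.
Proof.
move=> h; apply/ffunP => i; rewrite -!cf_ord; apply: h; by rewrite -ltnS.
Qed.

Lemma pw_add p a b : pw p a * pw p b = pw p (a + b).
Proof. by rewrite /pw -PoszM expnD. Qed.

Lemma pw_neq0 p e : (0 < p)%N -> pw p e != 0.
Proof. by move=> h; rewrite /pw; have := expn_gt0 p e; rewrite h; case: (p ^ e)%N. Qed.

Lemma phiS p k (a : R k) s : (s <= k)%N -> phi p a s = cf k a s * pw p (k - s) + phi p a s.+1.
Proof. by move=> h; rewrite /phi big_ltn // ltnS. Qed.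

Lemma phi_out p k (a : R k) s : (k < s)%N -> phi p a s = 0.
Proof. by move=> h; rewrite /phi big_geq. Qed.

Lemma phi_top p k (a : R k) : phi p a k = cf k a k.
Proof. by rewrite phiS // phi_out // subnn /pw expn0 mulr1 addr0. Qed.

Lemma phi_inj p k (a b : R k) : (0 < p)%N ->
  (forall s, (s <= k)%N -> phi p a s = phi p b s) -> a = b.
Proof.
move=> p0 h; apply: eq_R => t tk.
have e1 : phi p a t.+1 = phi p b t.+1.
  case: (ltnP t k) => [lt|ge]; first by apply: h.
  by rewrite !phi_out // ltnS.
have := h t tk; rewrite (phiS p k a t tk) (phiS p k b t tk) e1 => /addIr /eqP.
by rewrite (inj_eq (mulIf (pw_neq0 p (k - t) p0))) => /eqP.
Qed.

Lemma phiE p k (a : R k) s : phi p a s = \sum_(i < k.+1) (if (s <= i)%N then a i * pw p (k - i) else 0).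
Proof.
rewrite /phi big_geq_mkord big_mkcond; apply: eq_bigr => i _ /=.
by rewrite cf_ord.
Qed.

Lemma phi_add p k (a b : R k) s : phi p (addR k a b) s = phi p a s + phi p b s.
Proof.
rewrite /phi -big_split /=; apply: eq_big_nat => i /andP[_ h].
by rewrite cf_mk // mulrDl.
Qed.

Lemma phi_opp p k (a : R k) s : phi p (oppR k a) s = - phi p a s.
Proof.
rewrite /phi -sumrN; apply: eq_big_nat => i /andP[_ h].
by rewrite cf_mk // mulNr.
Qed.

Lemma phi_zero p k s : phi p (zeroR k) s = 0.
Proof.
rewrite /phi big1_seq // => i /andP[_]; rewrite mem_index_iota => /andP[_ h].
by rewrite cf_mk // mul0r.
Qed.


Lemma pw0 p : pw p 0 = 1.
Proof. by rewrite /pw expn0. Qed.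


Lemma phi_mul p k (a b : R k) s :
  phi p (mulR p k a b) s = phi p a s * phi p b s.
Proof.
rewrite !phiE mulr_suml.
have -> : \sum_(u < k.+1) (if (s <= u)%N then mulR p k a b u * pw p (k - u) else 0)
  = \sum_(u < k.+1) \sum_(i < k.+1) \sum_(j < k.+1)
      (if (s <= u)%N then (if minn i j == u then a i * b j * pw p (k - maxn i j) else 0) * pw p (k - u) else 0).
  apply: eq_bigr => u _; rewrite /mulR ffunE.
  case: ifP => _; last by rewrite big1 // => i _; rewrite big1.
  rewrite mulr_suml; apply: eq_bigr => i _; by rewrite mulr_suml.
rewrite exchange_big /=; apply: eq_bigr => i _.
rewrite mulr_sumr exchange_big /=; apply: eq_bigr => j _.
have hm : (minn i j <= k)%N.
  by rewrite geq_min -ltnS ltn_ord.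
rewrite (bigD1 (inord (minn i j))) //= big1; last first.
  move=> u hu; case: ifP => // _.
  case: eqP => [e|_]; last by rewrite mul0r.
  by move: hu; rewrite e; rewrite -(inj_eq val_inj) /= inordK // ?eqxx // ltnS.
rewrite inordK ?ltnS // eqxx addr0 leq_min.
case: (leqP s i) => si; case: (leqP s j) => sj /=; rewrite ?mul0r ?mulr0 //.
rewrite -mulrA pw_add mulrACA pw_add; congr (_ * pw _ _).
have := ltn_ord i; have := ltn_ord j; rewrite /minn /maxn; case: ifP => _ ; lia.
Qed.


Lemma phi_res p l k (a : R l) s : (s <= k)%N -> (k <= l)%N ->
  phi p (res p l k a) s = phi p a s.
Proof.
move=> sk kl; rewrite /phi.
rewrite big_nat_recr //.
rewrite [in RHS](@big_cat_nat _ _ _ k) //; last exact: leqW.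
rewrite cf_mk // ltnn subnn pw0 mulr1.
apply: f_equal2 => //.
apply: eq_big_nat => u /andP[_ uk].
rewrite cf_mk; last exact: ltnW.
rewrite uk mulrC mulrA pw_add mulrC; congr (_ * pw _ _); lia.
Qed.

Lemma phi_ind p k (x : R k) s : (s <= k.+1)%N ->
  phi p (ind k k.+1 x) s = pw p 1 * phi p x s.
Proof.
move=> sk; rewrite /phi big_nat_recr //= cf_mk // cf_out // mul0r addr0.
rewrite mulr_sumr; apply: eq_big_nat => u /andP[_ uk].
rewrite cf_mk; last exact: ltnW.
rewrite mulrCA pw_add; congr (_ * pw _ _); lia.
Qed.

Lemma jnd_top p k l (a : R k) : cf l (jnd p k l a) l = cf k a k.
Proof. by rewrite cf_mk // eqxx. Qed.

Lemma res_top p l k (a : R l) : (k <= l)%N -> cf k (res p l k a) k = phi p a k.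
Proof. by move=> kl; rewrite cf_mk // ltnn. Qed.

Lemma res_id p k (a : R k) : res p k k a = a.
Proof.
apply: eq_R => t tk; rewrite cf_mk //; case: ltnP => h.
  by rewrite subnn pw0 mul1r.
have -> : t = k by apply/eqP; rewrite eqn_leq tk h.
by rewrite big_nat1 subnn pw0 mulr1.
Qed.

Lemma jnd_id p k (a : R k) : (0 < p)%N -> jnd p k k a = a.
Proof.
move=> p0; apply: eq_R => t tk; rewrite cf_mk //; case: eqP => [->//|ne].
have tk' : (t < k)%N by rewrite ltn_neqAle tk andbT; apply/eqP.
rewrite leqNgt tk' subnn expn0 !expr1.
have := phiS p k a t tk; rewrite /phi => ->.
by rewrite addrK mulzK // pw_neq0.
Qed.

Definition cst k (c : int) : R k := mk k (fun t => if t == k then c else 0).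

Lemma phi_cst p k c s : (s <= k)%N -> phi p (cst k c) s = c.
Proof.
move=> sk; rewrite /phi big_nat_recr //= cf_mk // eqxx subnn pw0 mulr1.
rewrite big1_seq ?add0r // => u /andP[_]; rewrite mem_index_iota => /andP[_ uk].
rewrite cf_mk; last exact: ltnW.
by rewrite ifN ?mul0r // neq_ltn uk.
Qed.


Lemma phi_jnd p k (x : R k) s : prime p -> (s <= k)%N ->
  phi p (jnd p k k.+1 x) s = (phi p x s) ^+ p.
Proof.
move=> pp sk.
rewrite /phi big_nat_recr; last exact: leqW.
rewrite big_nat_recr //.
rewrite [X in _ = X]/=.
rewrite (cf_mk _ _ k.+1) // eqxx subnn pw0 mulr1.
rewrite (cf_mk _ _ k); last exact: leqW.
rewrite ifN; last by rewrite neq_ltn ltnSn.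
rewrite leqnn subSnn subnn expn1 expn0 expr1.
have -> : pw p 1 = p%:Z by rewrite /pw expn1.
rewrite divzK; last exact: fermat_int.
have hsum : \sum_(s <= i < k) (cf k.+1 (jnd p k k.+1 x) i * pw p (k.+1 - i))
   = phi p x s ^+ p - cf k x k ^+ p.
  rewrite -(phi_top p k x).
  rewrite (telescope_sumr_eq (fun i => - (phi p x i ^+ p))); [by rewrite opprK addrC | exact: sk |].
  move=> i /andP[si ik].
  rewrite cf_mk; last by apply: leqW; apply: ltnW.
  rewrite ifN; last by rewrite neq_ltn ltnS (ltnW ik).
  rewrite leqNgt ik /= subSnn expn1.
  rewrite -/(phi p x i) -/(phi p x i.+1).
  rewrite divzK; first by rewrite opprK addrC.
  rewrite subSn; last exact: ltnW.
  apply: lift_int => //; first by rewrite subn_gt0.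
  rewrite (phiS p k x i (ltnW ik)) addrK; apply: dvdz_mull; exact: dvdzz.
transitivity (phi p x s ^+ p - cf k x k ^+ p + (cf k x k ^+ p - cf k x k) + cf k x k).
  by rewrite -hsum.
rewrite -/(phi p x s).
by rewrite addrA subrK subrK.
Qed.


Definition J p m t (x : R t) : Prop :=
  forall s, (s <= t)%N -> (s <= m)%N -> phi p x s = 0.

Lemma zero_of_phi p t (x : R t) : (0 < p)%N ->
  (forall s, (s <= t)%N -> phi p x s = 0) -> x = zeroR t.
Proof. by move=> p0 h; apply: (phi_inj _ _ _ _ p0) => s hs; rewrite phi_zero h. Qed.

Lemma Char p m k t (x : R t) : (0 < p)%N -> (t <= m + k)%N ->
  Lpow p m k t x <-> J p m t x.
Proof.
move=> p0; elim: k t x => [|k IH] t x ht.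
  rewrite addn0 in ht; split.
    by move=> /= ->; move=> s _ _; rewrite phi_zero.
  move=> h; apply: (zero_of_phi _ _ _ p0) => s hs; apply: h => //; exact: leq_trans ht.
rewrite /= /calL; case: ifP => [h|h]; first exact: IH.
have et : t = (m + k).+1 by move/negbT: h; rewrite -ltnNge => h; lia.
subst t; rewrite /= IH // ; split.
  move=> hr s hs hm; rewrite -(phi_res p (m + k).+1 (m + k) x) //; last by lia.
  by apply: hr => //; lia.
move=> hx s hs hm; rewrite phi_res //.
by apply: hx => //; lia.
Qed.

Lemma mulR_comm p k (a b : R k) : (0 < p)%N -> mulR p k a b = mulR p k b a.
Proof. by move=> p0; apply: (phi_inj _ _ _ _ p0) => s _; rewrite !phi_mul mulrC. Qed.


Lemma notJ p m t (x : R t) : ~ J p m t x ->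
  exists s, [/\ (s <= t)%N, (s <= m)%N & phi p x s != 0].
Proof.
move=> nJ; apply: NNPP => hn; apply: nJ => s h1 h2; apply: NNPP => hne.
apply: hn; exists s; split => //; exact/eqP.
Qed.

Lemma prime_of_J p l m (I : ideal_family) : prime p -> (m <= l)%N ->
  (forall t, (t <= l)%N -> forall x : R t, I t x <-> J p m t x) ->
  is_prime_ideal p l I /\ (forall x : R 0, I 0%N x <-> x = zeroR 0).
Proof.
move=> pp ml H; have p0 := prime_gt0 pp.
have I0 : forall x : R 0, I 0%N x <-> x = zeroR 0.
  move=> x; rewrite H //; split.
    move=> h; apply: (zero_of_phi _ _ _ p0) => s hs; apply: h => //; exact: leq_trans hs (leq0n m).
  by move=> -> s _ _; rewrite phi_zero.
split=> //; split.
- split.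
  + move=> t tl; split.
    * by rewrite H // => s _ _; rewrite phi_zero.
    * move=> x y; rewrite !H // => hx hy s h1 h2; by rewrite phi_add hx ?hy ?addr0.
    * move=> x; rewrite !H // => hx s h1 h2; by rewrite phi_opp hx ?oppr0.
    * move=> a x; rewrite !H // => hx s h1 h2; by rewrite phi_mul hx ?mulr0.
  + move=> [//|k] _ kl /=; split.
    * move=> x; rewrite H ?H //; last exact: ltnW.
      move=> hx s h1 h2; rewrite phi_ind //.
      case: (leqP s k) => sk; first by rewrite hx ?mulr0.
      by rewrite phi_out ?mulr0.
    * move=> x; rewrite H ?H //; last exact: ltnW.
      move=> hx s h1 h2; rewrite phi_res //; apply: hx => //; exact: leqW.
    * move=> x; rewrite H ?H //; last exact: ltnW.
      move=> hx s h1 h2.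
      case: (leqP s k) => sk.
        by rewrite phi_jnd // hx // expr0n eqn0Ngt prime_gt0.
      have es : s = k.+1 by apply/eqP; rewrite eqn_leq h1 sk.
      subst s; rewrite phi_top jnd_top -(phi_top p); apply: hx => //.
      exact: ltnW.
- move=> h; have := proj1 (I0 (cst 0 1)) (h _).
  move=> /(congr1 (fun z => phi p z 0)); rewrite phi_cst // phi_zero.
  by move/eqP; rewrite oner_eq0.
- move=> k l' lk kl a b Hp.
  case: (classic (I k a)) => [ha|na]; first by left.
  case: (classic (I l' b)) => [hb|nb]; first by right.
  exfalso.
  have /notJ [s [s1 s2 s3]] : ~ J p m k a by rewrite -H.
  have /notJ [s' [s1' s2' s3']] : ~ J p m l' b by rewrite -H //; exact: leq_trans kl.
  have := Hp s s' s1 s1'.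
  rewrite H; last by rewrite geq_max (leq_trans s1 kl) (leq_trans s1' (leq_trans lk kl)).
  move=> /(_ (maxn s s')) h.
  have := h (leqnn _); rewrite geq_max s2 s2' => /(_ isT).
  rewrite phi_mul !phi_top !jnd_top !res_top //.
  by move/eqP; rewrite mulf_eq0 (negbTE s3) (negbTE s3').
Qed.


Lemma cf_add k (a b : R k) t : (t <= k)%N -> cf k (addR k a b) t = cf k a t + cf k b t.
Proof. by move=> h; rewrite /addR cf_mk. Qed.

Lemma cf_opp k (a : R k) t : (t <= k)%N -> cf k (oppR k a) t = - cf k a t.
Proof. by move=> h; rewrite /oppR cf_mk. Qed.

Lemma J_of_prime p l (I : ideal_family) : prime p -> is_prime_ideal p l I ->
  (forall x : R 0, I 0%N x <-> x = zeroR 0) ->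
  exists m, (m <= l)%N /\ (forall t, (t <= l)%N -> forall x : R t, I t x <-> J p m t x).
Proof.
move=> pp [[Hid Hcl] Hnz Hpr] I0; have p0 := prime_gt0 pp.
pose Z t := forall x : R t, I t x -> x = zeroR t.
have Z0 : Z 0%N by move=> x /I0.
have [m [ml Zm Znext]] : exists m, [/\ (m <= l)%N, Z m & ((m < l)%N -> ~ Z m.+1)].
  have gen : forall d n, (n + d = l)%N -> Z n ->
      exists m, [/\ (m <= l)%N, Z m & ((m < l)%N -> ~ Z m.+1)].
    elim=> [|d IHd] n e Zn.
      by exists n; split => //; rewrite -e addn0 ?ltnn.
    case: (classic (Z n.+1)) => [Zn1|nZ].
      by apply: (IHd n.+1) => //; rewrite addSnnS.
    by exists n; split => //; lia.
  exact: (gen l 0%N (add0n l) Z0).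
have Zdown : forall t, (t.+1 <= l)%N -> Z t.+1 -> Z t.
  move=> t tl Zt x hx.
  have [Hind _ _] := Hcl t.+1 isT tl.
  have e := Zt _ (Hind x hx).
  apply: eq_R => u ut.
  have := congr1 (fun z => cf t.+1 z u) e => /=.
  by rewrite /zeroR !cf_mk //; exact: leqW.
have Zle : forall t, (t <= m)%N -> Z t.
  have hd : forall d, (d <= m)%N -> Z (m - d)%N.
    elim=> [|d IHd] dm; first by rewrite subn0.
    have := IHd (ltnW dm).
    have -> : (m - d = (m - d.+1).+1)%N by lia.
    by apply: Zdown; lia.
  move=> t tm; have := hd (m - t)%N (leq_subr _ _).
  by rewrite subKn.
have Sub : forall t, (t <= l)%N -> forall x : R t, I t x -> J p m t x.
  elim=> [|t IHt] tl x hx.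
    by rewrite (Z0 _ hx) => s _ _; rewrite phi_zero.
  case: (leqP t.+1 m) => tm.
    by rewrite (Zle _ tm _ hx) => s _ _; rewrite phi_zero.
  have [_ Hres _] := Hcl t.+1 isT tl.
  have hr := IHt (ltnW tl) _ (Hres x hx).
  move=> s h1 h2.
  have st : (s <= t)%N by lia.
  by rewrite -(phi_res p t.+1 t x) //; apply: hr.
have Sup_low : forall t, (t <= m)%N -> forall x : R t, J p m t x -> I t x.
  move=> t tm x hx.
  have -> : x = zeroR t.
    apply: (zero_of_phi _ _ _ p0) => s hs; apply: hx => //; exact: leq_trans hs tm.
  by case: (Hid t (leq_trans tm ml)).
have Zt : forall t, (m < t)%N -> (t <= l)%N -> exists z : R t, I t z /\ cf t z t <> 0.
  elim=> [//|t IHt] mt tl.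
  case: (ltnP m t) => mt'.
    have [z [hz cz]] := IHt mt' (ltnW tl).
    exists (jnd p t t.+1 z); split; last by rewrite jnd_top.
    have [_ _ Hj] := Hcl t.+1 isT tl; exact: Hj.
  have et : t = m by lia.
  subst t.
  have nZ := Znext tl.
  have [z hz] : exists z, I m.+1 z /\ z <> zeroR m.+1.
    apply: NNPP => hn; apply: nZ => z hz; apply: NNPP => hne; apply: hn; exists z; split => //.
  exists z; split; first exact: hz.1.
  move=> cz; apply: hz.2; apply: (zero_of_phi _ _ _ p0) => s hs.
  case: (leqP s m) => sm; first by apply: (Sub _ tl _ hz.1).
  have -> : s = m.+1 by lia.
  by rewrite phi_top.
have Key : forall t, (m < t)%N -> (t <= l)%N ->
    (forall y : R t.-1, J p m t.-1 y -> I t.-1 y) ->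
    forall w : R t, J p m t w -> cf t w t = 0 -> I t w.
  move=> [//|k] mlk kl IH w hw cw.
  pose y := mk k (fun u => cf k.+1 w u).
  have e : w = ind k k.+1 y.
    apply: eq_R => u uk; rewrite [in RHS]cf_mk //.
    case: (leqP u k) => uk'; first by rewrite cf_mk.
    have -> : u = k.+1 by lia.
    by rewrite cw cf_out.
  have hy : J p m k y.
    move=> s sk sm; have := hw s (leqW sk) sm.
    rewrite e phi_ind; last exact: leqW.
    by move/eqP; rewrite mulf_eq0 (negbTE (pw_neq0 _ _ p0)) => /eqP.
  have [Hind _ _] := Hcl k.+1 isT kl.
  rewrite e; apply: Hind; exact: IH.
have Pmain : forall t, (t <= l)%N -> forall i, (i <= t)%N -> forall x : R i, J p m i x -> I i x.
  elim=> [|t IHt] tl i it x hx.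
    rewrite leqn0 in it; move/eqP: it => ?; subst i.
    by apply: Sup_low.
  case: (leqP i t) => it'; first exact: IHt (ltnW tl) i it' x hx.
  have ei : i = t.+1 by lia.
  subst i.
  case: (leqP t.+1 m) => tm; first exact: Sup_low.
  have IHT := IHt (ltnW tl).
  have [z [hz cz]] := Zt t.+1 tm tl.
  have Jz := Sub _ tl _ hz.
  set c := cf t.+1 z t.+1 in cz.
  have [Hz0 Hadd Hopp Hmul] := Hid t.+1 tl.
  pose u := mulR p t.+1 (cst t.+1 c) x.
  have Iu : I t.+1 u.
    pose v := mulR p t.+1 (cst t.+1 (cf t.+1 x t.+1)) z.
    have Iv : I t.+1 v by apply: Hmul.
    pose w := addR t.+1 u (oppR t.+1 v).
    have Iw : I t.+1 w.
      apply: (Key t.+1 tm tl (IHT t (leqnn t))).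
      - move=> s h1 h2; rewrite phi_add phi_opp !phi_mul (hx s h1 h2) (Jz s h1 h2).
        by rewrite !mulr0 subrr.
        rewrite cf_add // cf_opp // -(phi_top p t.+1 u) -(phi_top p t.+1 v) /u /v.
        rewrite !phi_mul !phi_cst // !phi_top -/c.
        by rewrite mulrC subrr.
    have -> : u = addR t.+1 w v.
      by apply: eq_R => s hs; rewrite /w !cf_add // cf_opp // subrK.
    by apply: Hadd.
  have [] := Hpr t.+1 0%N (leq0n _) tl x (cst 0 c).
  - move=> i j hi; rewrite leqn0 => /eqP ->; rewrite maxn0 jnd_id // res_id.
    case: (leqP i t) => hit.
      have [_ _ _ Hmi] := Hid i (leq_trans hit (ltnW tl)).
      rewrite mulR_comm //; apply: Hmi; apply: (IHT i hit).
      move=> s h1 h2; rewrite phi_res //; apply: hx => //; lia.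
    have ei : i = t.+1 by lia.
    subst i; rewrite res_id.
    set N := jnd p 0 t.+1 (cst 0 c).
    pose q := mulR p t.+1 x N.
    pose w' := addR t.+1 q (oppR t.+1 u).
    have Iw' : I t.+1 w'.
      apply: (Key t.+1 tm tl (IHT t (leqnn t))).
      - move=> s h1 h2; rewrite phi_add phi_opp !phi_mul (hx s h1 h2).
        by rewrite !mulr0 mul0r subrr.
      - rewrite cf_add // cf_opp // -(phi_top p t.+1 q) -(phi_top p t.+1 u) /q /u.
        rewrite !phi_mul !phi_cst // (phi_top p t.+1 N) /N jnd_top cf_mk //.
        by rewrite mulrC subrr.
    rewrite -/q.
    have -> : q = addR t.+1 w' u.
      by apply: eq_R => s hs; rewrite /w' !cf_add // cf_opp // subrK.
    by apply: Hadd.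
  - by [].
  - move/I0 => /(congr1 (fun z => phi p z 0)); rewrite phi_cst // phi_zero.
    by move=> e; exfalso; apply: cz.
exists m; split; first exact: ml.

move=> t0 tl0 x0; split; first exact: Sub.
move=> hx0; exact: (Pmain t0 tl0 t0 (leqnn t0) x0 hx0).
Qed.


Theorem proposition6 (p r l : nat) : prime p -> (l <= r)%N ->
  (forall I : ideal_family,
     (is_prime_ideal p l I /\ (forall x : R 0, I 0%N x <-> x = zeroR 0))
     <-> exists k : nat, (k <= l)%N /\ eqfam l I (Lpow p (l - k) k))
  /\ (forall k : nat, (k < l)%N ->
        strict_subfam l (Lpow p (l - k) k) (Lpow p (l - k.+1) k.+1)).
Proof.
move=> pp _; have p0 := prime_gt0 pp; split.
- move=> I; split.
  + move=> [HP HI0].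
    have [m [ml HJ]] := J_of_prime p l I pp HP HI0.
    exists (l - m)%N; split; first exact: leq_subr.
    rewrite subKn // => t tl x.
    apply: iff_trans (HJ t tl x) (iff_sym (Char p m (l - m) t x p0 _)).
    by rewrite subnKC.
  + move=> [k [kl HE]].
    apply: (prime_of_J p l (l - k) I pp (leq_subr _ _)) => t tl x.
    apply: iff_trans (HE t tl x) _; apply: Char => //.
    by rewrite subnK.
- move=> k kl.
  have [n' en] : exists n', (l - k = n'.+1)%N.
    by exists (l - k).-1; rewrite prednK // subn_gt0.
  rewrite subnS en /=.
  split.
  + move=> t tl x h.
    apply/(Char p n' k.+1 t x p0); first by lia.
    have := (Char p n'.+1 k t x p0 ltac:(lia)).1 h.
    move=> hJ s h1 h2; apply: hJ => //; exact: leqW.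
  + move=> hsub.
    pose x' := addR n'.+1 (cst n'.+1 (pw p 1)) (oppR n'.+1 (ind n' n'.+1 (cst n' 1))).
    have hB : Lpow p n' k.+1 n'.+1 x'.
      apply/(Char p n' k.+1 n'.+1 x' p0); first by lia.
      move=> s h1 h2.
      by rewrite phi_add phi_opp phi_cst // phi_ind // phi_cst // mulr1 subrr.
    have := hsub n'.+1 ltac:(lia) x' hB.
    move/(Char p n'.+1 k n'.+1 x' p0 ltac:(lia)) => hJ.
    have := hJ n'.+1 (leqnn _) (leqnn _).
    rewrite phi_add phi_opp phi_cst // phi_ind // phi_out // mulr0 subr0.
    by move/eqP; rewrite (negbTE (pw_neq0 _ _ p0)).
Qed.
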